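(* Let $\epsilon\ge 0$ and let $\mathcal{G}$ be a weighted congestion game with latency functions $\ell_e(x)=\alpha_e x$, $\alpha_e\ge 0$. Define, for every strategy profile $S=(s_1,\dots,s_n)$, $$\Phi_\epsilon(S)=\frac12\sum_{e\in E}\alpha_e L_e(S)^2+\frac12\cdot\frac{1-\epsilon}{1+\epsilon}\sum_{e\in E}\sum_{i:\,e\in s_i}\alpha_e w_i^2 .$$ If $S$ is a local minimum of $\Phi_\epsilon$, i.e., $\Phi_\epsilon(S)\le\Phi_\epsilon(S_{-i}\diamond t)$ for every $i\in[n]$ and every $t\in\Sigma_i$, then $S$ is an $\epsilon$-PNE.
   Context: A weighted congestion game consists of a finite set $[n]=\{1,\dots,n\}$ of players, a finite set $E$ of resources, for each player $i$ a weight $w_i>0$ and a nonempty finite strategy set $\Sigma_i\subseteq 2^E$, and for each resource $e$ a latency function $\ell_e:\mathbb{R}_{\ge 0}\to\mathbb{R}_{\ge 0}$. For a strategy profile $S=(s_1,\dots,s_n)\in\prod_i\Sigma_i$, the congestion of $e$ is $L_e(S)=\sum_{i:\,e\in s_i}w_i$ and the cost of player $i$ is $c_i(S)=\sum_{e\in s_i}\ell_e(L_e(S))$. For $t\in\Sigma_i$, $(S_{-i}\diamond t)$ denotes the profile obtained from $S$ by replacing $s_i$ with $t$. For $\epsilon\ge 0$, $S$ is an $\epsilon$-approximate pure Nash equilibrium ($\epsilon$-PNE) if $c_i(S)\le(1+\epsilon)c_i(S_{-i}\diamond t)$ for all $i\in[n]$ and all $t\in\Sigma_i$. *)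

(* Defs.v *)
From HB Require Import structures.
From mathcomp Require Import all_boot all_order all_algebra.
Set Implicit Arguments. Unset Strict Implicit. Unset Printing Implicit Defensive.
Import Order.TTheory GRing.Theory Num.Theory.
Local Open Scope ring_scope.

Section WCG.
Variables (R : realFieldType) (n : nat) (E : finType).
Definition profile := {ffun 'I_n -> {set E}}.

Definition is_profile (Sigma : 'I_n -> {set {set E}}) (S : profile) : Prop :=
  forall i, S i \in Sigma i.

Definition congestion (w : 'I_n -> R) (S : profile) (e : E) : R :=
  \sum_(i < n | e \in S i) w i.

Definition cost (w : 'I_n -> R) (ell : E -> R -> R) (S : profile) (i : 'I_n) : R :=
  \sum_(e in S i) ell e (congestion w S e).

Definition deviate (S : profile) (i : 'I_n) (t : {set E}) : profile :=
  [ffun j => if j == i then t else S j].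

Definition is_eps_PNE (w : 'I_n -> R) (Sigma : 'I_n -> {set {set E}})
    (ell : E -> R -> R) (eps : R) (S : profile) : Prop :=
  forall i t, t \in Sigma i -> cost w ell S i <= (1 + eps) * cost w ell (deviate S i t) i.

Definition Phi (w : 'I_n -> R) (alpha : E -> R) (eps : R) (S : profile) : R :=
  2^-1 * \sum_(e : E) alpha e * congestion w S e ^+ 2
  + 2^-1 * ((1 - eps) / (1 + eps)) *
      \sum_(e : E) \sum_(i < n | e \in S i) alpha e * w i ^+ 2.
End WCG.

(* Main.v *)
Require Import Defs.
From HB Require Import structures.
From mathcomp Require Import all_boot all_order all_algebra.
From mathcomp Require Import ring lra.
Import Order.TTheory GRing.Theory Num.Theory.
Local Open Scope ring_scope.

Lemma sum_dev (R : realFieldType) (n : nat) (E : finType) (S : profile n E) i t e (F : 'I_n -> R) :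
  \sum_(j < n | e \in deviate S i t j) F j =
  \sum_(j < n | e \in S j) F j - (if e \in S i then F i else 0) + (if e \in t then F i else 0).
Proof.
rewrite big_mkcond [in RHS]big_mkcond /=.
rewrite (bigD1 i) //= [X in _ = X - _ + _](bigD1 i) //=.
rewrite /deviate ffunE eqxx.
have -> : \sum_(j < n | j != i) (if e \in [ffun j => if j == i then t else S j] j then F j else 0)
  = \sum_(j < n | j != i) (if e \in S j then F j else 0).
  by apply: eq_bigr => j /negbTE hj; rewrite ffunE hj.
rewrite addrC; lra.
Qed.
Lemma key (R : realFieldType) (a b : bool) (al L w eps c Q L' Q' : R) :
  0 <= eps -> 0 < w -> 0 <= al -> 0 <= L -> (a -> w <= L) -> c * (1 + eps) = 1 - eps ->
  L' = L - (if a then w else 0) + (if b then w else 0) ->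
  Q' = Q - (if a then al * w ^+ 2 else 0) + (if b then al * w ^+ 2 else 0) ->
  (1 + eps) * (2^-1 * (al * L' ^+ 2 - al * L ^+ 2) + 2^-1 * c * (Q' - Q))
  <= w * ((1 + eps) * (if b then al * L' else 0) - (if a then al * L else 0)).
Proof.
move=> he hw ha hL hLw hc -> ->.
have h1 : 0 <= eps * al * w * L by rewrite !mulr_ge0 // ltW.
have h2 : 0 <= al * w * w by rewrite !mulr_ge0 // ltW.
have h3 : 0 <= eps * al * w * w by rewrite !mulr_ge0 // ltW.
have hc' : c * al * w * w * (1 + eps) = (1 - eps) * al * w * w.
  by rewrite -hc; ring.
case: a hLw => hLw; case: b => /=.
- lra.
- have h4 : 0 <= eps * al * w * (L - w).
    apply: mulr_ge0; first by rewrite !mulr_ge0 // ltW.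
    by rewrite subr_ge0; apply: hLw.
  lra.
- lra.
- lra.
Qed.

Theorem mainTheorem5 (R : realFieldType) (n : nat) (E : finType)
    (w : 'I_n -> R) (Sigma : 'I_n -> {set {set E}}) (alpha : E -> R) (eps : R)
    (S : profile n E) :
  0 <= eps ->
  (forall i, 0 < w i) ->
  (forall i, Sigma i != set0) ->
  (forall e, 0 <= alpha e) ->
  is_profile Sigma S ->
  (forall (i : 'I_n) (t : {set E}), t \in Sigma i ->
     Phi w alpha eps S <= Phi w alpha eps (deviate S i t)) ->
  is_eps_PNE w Sigma (fun e x => alpha e * x) eps S.
Proof.
move=> he hw hS ha hprof hmin i t ht.
have hp : 1 + eps != 0 by rewrite gt_eqF // ltr_pwDl.
set c := (1 - eps) / (1 + eps).
have hc : c * (1 + eps) = 1 - eps by rewrite /c divfK.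
have hdiff := hmin i t ht; rewrite -subr_ge0 in hdiff.
set S' := deviate S i t.
pose L (X : profile n E) e := congestion w X e.
pose Q (X : profile n E) e := \sum_(j < n | e \in X j) alpha e * w j ^+ 2.
pose D e := 2^-1 * (alpha e * L S' e ^+ 2 - alpha e * L S e ^+ 2) + 2^-1 * c * (Q S' e - Q S e).
have HD : Phi w alpha eps S' - Phi w alpha eps S = \sum_e D e.
  rewrite /D big_split /= -!mulr_sumr !sumrB /Phi /L /Q -/c; ring.
have HS'i : S' i = t by rewrite /S' /deviate ffunE eqxx.
rewrite /cost HS'i.
rewrite [X in X <= _]big_mkcond [X in _ <= _ * X]big_mkcond /=.
rewrite -subr_ge0.
have hwi := hw i.
suff : 0 <= w i * ((1 + eps) * \sum_(e : E) (if e \in t then alpha e * congestion w S' e else 0)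
     - \sum_(e : E) (if e \in S i then alpha e * congestion w S e else 0)).
  by rewrite pmulr_rge0.
apply: (le_trans (_ : 0 <= (1 + eps) * \sum_e D e)).
  by rewrite -HD mulr_ge0 // addr_ge0.
rewrite mulr_sumr mulr_sumr -sumrB mulr_sumr.
apply: ler_sum => e _.
apply: (@key R (e \in S i) (e \in t) (alpha e) (L S e) (w i) eps c (Q S e) (L S' e) (Q S' e)) => //.
- by rewrite /L /congestion sumr_ge0 // => j _; rewrite ltW.
- move=> hei; rewrite /L /congestion (bigD1 i) //= lerDl.
  by apply: sumr_ge0 => j _; apply: ltW.
- by rewrite /L /congestion /S' sum_dev.
- by rewrite /Q /S' (@sum_dev _ _ _ _ _ _ _ (fun j => alpha e * w j ^+ 2)).
Qed.
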